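(* Let $E$ be a finite directed graph and let $R$ be a left (respectively right) noetherian ring. If $E$ satisfies Condition (NE), then $(L_R(E))_0$ is left (respectively right) noetherian as a ring.
   Context: A directed graph $E=(E^0,E^1,s,r)$ has vertex set $E^0$, edge set $E^1$, source and range maps $s,r$; finite means $E^0,E^1$ finite. A path is a sequence of edges $f_1\cdots f_n$ with $s(f_{i+1})=r(f_i)$, of length $n$; a cycle is a path with $s(f_1)=r(f_n)$ and $s(f_i)\neq s(f_1)$ for $2\le i\le n$; it has an exit if some edge $f$ satisfies $s(f)=s(f_i)$ for some $i$ with $f\neq f_i$. Condition (NE): no cycle has an exit. $L_R(E)$ is the $R$-algebra generated by $v\in E^0$, $f,f^*$ ($f\in E^1$), with $R$ commuting with generators, subject to $v_iv_j=\delta_{i,j}v_i$; $s(f)f=fr(f)=f$, $r(f)f^*=f^*s(f)=f^*$; $f^*f'=\delta_{f,f'}r(f)$; and $\sum_{s(f)=v}ff^*=v$ whenever $s^{-1}(v)$ is nonempty and finite. With $\alpha^*=f_n^*\cdots f_1^*$, every element is a finite sum $\sum r_i\alpha_i\beta_i^*$ ($r_i\in R$, $\alpha_i,\beta_i$ paths, vertices as length-0 paths); $(L_R(E))_0$ is the subring of such sums with $\mathrm{len}(\alpha_i)=\mathrm{len}(\beta_i)$ for all $i$. *)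

(* Defs.v *)
(* Leavitt path algebras built as a quotient of the free
   (noncommutative) R-algebra {malg R[{fmonom letter}]} (multinomials' monalg)
   by the two-sided ideal generated by the Leavitt relations. *)
From HB Require Import structures.
From mathcomp Require Import all_boot all_order all_algebra.
From mathcomp Require Import generic_quotient.
From mathcomp Require Import boolp.
From mathcomp.multinomials Require Import monalg.
Set Implicit Arguments.
Unset Strict Implicit.
Unset Printing Implicit Defensive.
Import GRing.Theory.
Local Open Scope ring_scope.
Local Open Scope quotient_scope.

(* Noetherian conditions (ACC on one-sided ideals), stated for a subset
   S of a carrier T closed under given 0, subtraction, multiplication;
   this lets us speak of the subring (L_R(E))_0 of L_R(E).             *)

Definition left_ideal_in {T : Type} (S : T -> Prop) (z : T)
  (sub mul : T -> T -> T) (J : T -> Prop) : Prop :=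
  [/\ (forall x, J x -> S x), J z,
      (forall x y, J x -> J y -> J (sub x y)) &
      (forall a x, S a -> J x -> J (mul a x))].

Definition right_ideal_in {T : Type} (S : T -> Prop) (z : T)
  (sub mul : T -> T -> T) (J : T -> Prop) : Prop :=
  [/\ (forall x, J x -> S x), J z,
      (forall x y, J x -> J y -> J (sub x y)) &
      (forall a x, S a -> J x -> J (mul x a))].

Definition ACC {T : Type} (is_ideal : (T -> Prop) -> Prop) : Prop :=
  forall C : nat -> T -> Prop,
    (forall n, is_ideal (C n)) ->
    (forall n x, C n x -> C n.+1 x) ->
    exists N, forall n, (N <= n)%N -> forall x, C n x -> C N x.

Definition left_noetherian (R : ringType) : Prop :=
  ACC (left_ideal_in (fun _ : R => True) 0 (fun x y => x - y) *%R).
Definition right_noetherian (R : ringType) : Prop :=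
  ACC (right_ideal_in (fun _ : R => True) 0 (fun x y => x - y) *%R).

Section Leavitt.
Variables (V Ed : finType) (src rng : Ed -> V).

Definition is_cycle (c : seq Ed) : Prop :=
  exists f1 fs, c = f1 :: fs /\
    sorted (fun e f => rng e == src f) c /\
    src f1 = rng (last f1 fs) /\
    (forall f, f \in fs -> src f <> src f1).

Definition cycle_has_exit (c : seq Ed) : Prop :=
  exists i f, (i < size c)%N /\ src f = src (nth f c i) /\ f <> nth f c i.

Definition condition_NE : Prop :=
  forall c, is_cycle c -> ~ cycle_has_exit c.

(* letters: vertices v, real edges f, ghost edges f^* *)
Definition letter : choiceType := (V + (Ed + Ed))%type.
Definition Lv (v : V) : letter := inl v.
Definition Le (e : Ed) : letter := inr (inl e).
Definition Lg (e : Ed) : letter := inr (inr e).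

Variable R : ringType.

(* free unital R-algebra on the letters (R commutes with the letters) *)
Definition FA := {malg R[{fmonom letter}]}.
Definition word (w : seq letter) : FA := << FMonom w >>.
Definition X (l : letter) : FA := word [:: l].

(* the Leavitt relations, written as elements that must vanish *)
Inductive leavitt_rel : FA -> Prop :=
  | rel_vv v w : leavitt_rel (X (Lv v) * X (Lv w) - (if v == w then X (Lv v) else 0))
  | rel_sf f : leavitt_rel (X (Lv (src f)) * X (Le f) - X (Le f))
  | rel_fr f : leavitt_rel (X (Le f) * X (Lv (rng f)) - X (Le f))
  | rel_rg f : leavitt_rel (X (Lv (rng f)) * X (Lg f) - X (Lg f))
  | rel_gs f : leavitt_rel (X (Lg f) * X (Lv (src f)) - X (Lg f))
  | rel_CK1 f f' : leavitt_rel (X (Lg f) * X (Le f') -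
                                (if f == f' then X (Lv (rng f)) else 0))
  | rel_CK2 v : (exists f, src f = v) ->
      leavitt_rel ((\sum_(f : Ed | src f == v) X (Le f) * X (Lg f)) - X (Lv v))
  (* E^0 is finite, so L_R(E) is unital with unit sum_v v; quotienting the
     unital free algebra we identify its 1 with sum_v v *)
  | rel_unit : leavitt_rel (1 - \sum_(v : V) X (Lv v)).

Inductive leavitt_ideal : FA -> Prop :=
  | lid0 : leavitt_ideal 0
  | lid_gen a rho b : leavitt_rel rho -> leavitt_ideal (a * rho * b)
  | lid_add x y : leavitt_ideal x -> leavitt_ideal y -> leavitt_ideal (x + y).

Lemma leavitt_ideal_opp x : leavitt_ideal x -> leavitt_ideal (- x).
Proof.
elim=> [|a rho b Hr|x1 y1 _ H1 _ H2]; first by rewrite oppr0; constructor.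
  by rewrite -!mulNr; constructor.
by rewrite opprD; constructor.
Qed.

Definition lpa_eq (x y : FA) : bool := `[< leavitt_ideal (x - y) >].

Lemma lpa_eq_refl : reflexive lpa_eq.
Proof. by move=> x; apply/asboolP; rewrite subrr; constructor. Qed.

Lemma lpa_eq_sym : symmetric lpa_eq.
Proof.
move=> x y; apply/asboolP/asboolP => /leavitt_ideal_opp; by rewrite opprB.
Qed.

Lemma lpa_eq_trans : transitive lpa_eq.
Proof.
move=> y x z /asboolP H1 /asboolP H2; apply/asboolP.
by have := lid_add H1 H2; rewrite addrA subrK.
Qed.

Definition lpa_equiv : equiv_rel FA :=
  EquivRel lpa_eq lpa_eq_refl lpa_eq_sym lpa_eq_trans.

Definition LPA := {eq_quot lpa_equiv}.

(* ring operations on L_R(E), induced from FA (well defined since the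
   kernel is a two-sided ideal) *)
Definition lpa_zero : LPA := \pi_LPA 0.
Definition lpa_sub (x y : LPA) : LPA := \pi_LPA (repr x - repr y).
Definition lpa_mul (x y : LPA) : LPA := \pi_LPA (repr x * repr y).

(* paths: a start vertex v and a list of consecutive edges starting at v;
   the path of length 0 at v is the vertex v itself *)
Definition is_path (p : V * seq Ed) : bool :=
  (if p.2 is e :: _ then src e == p.1 else true) &&
  sorted (fun e f => rng e == src f) p.2.

Definition plen (p : V * seq Ed) : nat := size p.2.

Definition pword (p : V * seq Ed) : FA :=
  if p.2 is [::] then X (Lv p.1) else word (map Le p.2).
Definition pword_star (p : V * seq Ed) : FA :=
  if p.2 is [::] then X (Lv p.1) else word (map Lg (rev p.2)).

Definition LPA0 (x : LPA) : Prop :=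
  exists s : seq (R * (V * seq Ed) * (V * seq Ed)),
    all (fun t => [&& is_path t.1.2, is_path t.2 & plen t.1.2 == plen t.2]) s /\
    x = \pi_LPA (\sum_(t <- s) t.1.1 *: (pword t.1.2 * pword_star t.2)).

Definition LPA0_left_noetherian : Prop :=
  ACC (left_ideal_in LPA0 lpa_zero lpa_sub lpa_mul).
Definition LPA0_right_noetherian : Prop :=
  ACC (right_ideal_in LPA0 lpa_zero lpa_sub lpa_mul).

End Leavitt.

(* Main.v *)
From HB Require Import structures.
From mathcomp Require Import all_boot all_order all_algebra.
From mathcomp Require Import generic_quotient boolp.
From mathcomp.multinomials Require Import monalg.
Require Import Defs.
Set Implicit Arguments.
Unset Strict Implicit.
Unset Printing Implicit Defensive.
Import GRing.Theory.
Local Open Scope ring_scope.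
Local Open Scope quotient_scope.

Section VecACC.
Variable R : ringType.
Variable sc : R -> R -> R.
Hypothesis sc0 : forall a, sc a 0 = 0.

Definition isId (J : R -> Prop) :=
  [/\ J 0, (forall x y, J x -> J y -> J (x - y)) & (forall a x, J x -> J (sc a x))].

Definition is_sub (N : nat) (D : (nat -> R) -> Prop) :=
  [/\ (forall x, D x -> forall i, (N <= i)%N -> x i = 0), D (fun _ => 0),
      (forall x y, D x -> D y -> D (fun i => x i - y i)) &
      (forall a x, D x -> D (fun i => sc a (x i)))].

Lemma chain_mono (T : Type) (C : nat -> T -> Prop) :
  (forall n x, C n x -> C n.+1 x) -> forall m n x, (m <= n)%N -> C m x -> C n x.
Proof.
move=> H m n x /subnK <-; elim: (n - m)%N => [|k IH] //= Cx.
by rewrite addSn; apply: H; apply: IH.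
Qed.

Hypothesis accR : forall C : nat -> R -> Prop,
    (forall n, isId (C n)) ->
    (forall n x, C n x -> C n.+1 x) ->
    exists N, forall n, (N <= n)%N -> forall x, C n x -> C N x.

Lemma vecACC N : forall C : nat -> (nat -> R) -> Prop,
    (forall n, is_sub N (C n)) ->
    (forall n x, C n x -> C n.+1 x) ->
    exists M, forall n, (M <= n)%N -> forall x, C n x -> C M x.
Proof.
elim: N => [|N IH] C HC Hm.
  exists 0%N => n _ x Cx.
  have [supp _ _ _] := HC n; have [_ z _ _] := HC 0%N.
  suff -> : x = (fun _ => 0) by [].
  by apply: funext => i; apply: (supp _ Cx).
pose A n r := exists x, C n x /\ x N = r.
pose B n x := C n x /\ x N = 0.
have [M1 HM1] : exists M, forall n, (M <= n)%N -> forall r, A n r -> A M r.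
  apply: accR.
    move=> n; have [supp z sb sca] := HC n; split.
    - by exists (fun _ => 0).
    - by move=> r s [x [Cx <-]] [y [Cy <-]]; exists (fun i => x i - y i); split=> //; apply: sb.
    - by move=> a r [x [Cx <-]]; exists (fun i => sc a (x i)); split=> //; apply: sca.
  by move=> n r [x [Cx <-]]; exists x; split=> //; apply: Hm.
have [M2 HM2] : exists M, forall n, (M <= n)%N -> forall x, B n x -> B M x.
  apply: IH; last by move=> n x [Cx Ex]; split=> //; apply: Hm.
  move=> n; have [supp z sb sca] := HC n; split.
  - move=> x [Cx Ex] i; rewrite leq_eqVlt => /orP [/eqP <- //|]; exact: supp.
  - by split.
  - by move=> x y [Cx Ex] [Cy Ey]; split; [apply: sb|rewrite Ex Ey subrr].
  - by move=> a x [Cx Ex]; split; [apply: sca|rewrite Ex sc0].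
exists (maxn M1 M2) => n le x Cx.
have mono := chain_mono Hm.
have [y [Cy Ey]] : A (maxn M1 M2) (x N).
  have := HM1 n (leq_trans (leq_maxl _ _) le) (x N) (ex_intro _ x (conj Cx erefl)).
  move=> [y [Cy Ey]]; exists y; split=> //; exact: mono _ _ _ (leq_maxl _ _) Cy.
have [supp z sb sca] := HC (maxn M1 M2).
have [_ _ sbn _] := HC n.
have Bz : B n (fun i => x i - y i).
  split; last by rewrite Ey subrr.
  by apply: sbn => //; apply: mono Cy.
have [Cz _] := HM2 n (leq_trans (leq_maxr _ _) le) _ Bz.
have Cz' := mono _ _ _ (leq_maxr M1 M2) Cz.
have Cw := sb _ _ z Cz'.
have := sb _ _ Cy Cw.
suff -> : (fun i => y i - ((fun _ : nat => 0) i - (fun i0 : nat => x i0 - y i0) i)) = x by [].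
by apply: funext => i /=; rewrite sub0r opprK addrC subrK.
Qed.

End VecACC.

Section GenI.
Variables (T : ringType) (I : T -> Prop).
Hypotheses (I0 : I 0) (Iadd : forall x y, I x -> I y -> I (x + y))
  (Iopp : forall x, I x -> I (- x)) (Il : forall a x, I x -> I (a * x))
  (Ir : forall a x, I x -> I (x * a)).
Local Notation geqv x y := (I (x - y)).

Lemma g_refl x : geqv x x.
Proof. by rewrite subrr. Qed.
Lemma g_sym x y : geqv x y -> geqv y x.
Proof. by move/Iopp; rewrite opprB. Qed.
Lemma g_trans y x z : geqv x y -> geqv y z -> geqv x z.
Proof. by move=> H1 H2; have := Iadd H1 H2; rewrite addrA subrK. Qed.
Lemma g_add x y x' y' : geqv x x' -> geqv y y' -> geqv (x + y) (x' + y').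
Proof. by move=> H1 H2; have := Iadd H1 H2; rewrite opprD addrACA. Qed.
Lemma g_mul x y x' y' : geqv x x' -> geqv y y' -> geqv (x * y) (x' * y').
Proof.
move=> H1 H2; apply: (@g_trans (x' * y)).
  by rewrite -mulrBl; apply: Ir.
by rewrite -mulrBr; apply: Il.
Qed.
Lemma g_assoc x y z w : geqv ((x * y) * z) w -> geqv (x * (y * z)) w.
Proof. by rewrite mulrA. Qed.
Lemma g_assocr x y z w : geqv (x * (y * z)) w -> geqv ((x * y) * z) w.
Proof. by rewrite mulrA. Qed.
Lemma g_mid x a b y : geqv (a * b) 0 -> geqv (x * a * (b * y)) 0.
Proof.
move=> H; have -> : x * a * (b * y) - 0 = x * (a * b - 0) * y by rewrite !subr0 !mulrA.
by apply: Ir; apply: Il.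
Qed.
Lemma g_mid2 x a b c y : geqv (a * b) c -> geqv (x * a * (b * y)) (x * c * y).
Proof.
move=> H; have -> : x * a * (b * y) - x * c * y = x * (a * b - c) * y.
  by rewrite mulrBr mulrBl !mulrA.
by apply: Ir; apply: Il.
Qed.
Lemma g_idem x u y : geqv (u * u) u -> geqv (x * u * y) ((x * u) * (u * y)).
Proof.
move=> /Iopp; rewrite opprB => H.
have -> : x * u * y - x * u * (u * y) = x * (u - u * u) * y.
  by rewrite mulrBr mulrBl !mulrA.
by apply: Ir; apply: Il.
Qed.
Lemma g_zero_mul x y : geqv x 0 -> geqv (x * y) 0.
Proof. by rewrite !subr0; apply: Ir. Qed.
Lemma g_mul_zero x y : geqv y 0 -> geqv (x * y) 0.
Proof. by rewrite !subr0; apply: Il. Qed.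
Lemma g_sub x y x' y' : geqv x x' -> geqv y y' -> geqv (x - y) (x' - y').
Proof.
move=> H1 /Iopp H2; have := Iadd H1 H2.
suff -> : x - y - (x' - y') = (x - x') + (- (y - y')) by [].
rewrite !opprB [y' - x']addrC [y' - y]addrC !addrA; congr (_ + _).
by rewrite -!addrA; congr (_ + _); rewrite addrC.
Qed.
Lemma g_sum (I0t : Type) (r : seq I0t) (F G : I0t -> T) :
  (forall i, geqv (F i) (G i)) -> geqv (\sum_(i <- r) F i) (\sum_(i <- r) G i).
Proof.
move=> H; elim: r => [|i r IH]; first by rewrite !big_nil subrr.
by rewrite !big_cons; apply: g_add.
Qed.
End GenI.

Section Alg.
Variables (V Ed : finType) (src rng : Ed -> V) (R : ringType).
Local Notation FA := (FA V Ed R).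
Local Notation word := (@word V Ed R).
Local Notation X := (@X V Ed R).
Local Notation LI := (@leavitt_ideal V Ed src rng R).
Local Notation eqv x y := (LI (x - y)).

Lemma LI_mull a x : LI x -> LI (a * x).
Proof.
elim=> [|a' rho b Hr|x1 y1 _ H1 _ H2]; first by rewrite mulr0; constructor.
  by rewrite !mulrA; apply: lid_gen.
by rewrite mulrDr; constructor.
Qed.

Lemma LI_mulr a x : LI x -> LI (x * a).
Proof.
elim=> [|a' rho b Hr|x1 y1 _ H1 _ H2]; first by rewrite mul0r; constructor.
  by rewrite -mulrA; apply: lid_gen.
by rewrite mulrDl; constructor.
Qed.

Lemma LI_scale (r : R) x : LI x -> LI (r *: x).
Proof. by move=> H; rewrite -[x]mul1r scalerAl; apply: LI_mull. Qed.

Lemma LI_rel rho : leavitt_rel src rng rho -> LI rho.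
Proof. by move=> H; rewrite -[rho]mul1r -[_ * _]mulr1; constructor. Qed.

Lemma eqv_refl x : eqv x x.
Proof. by rewrite subrr; constructor. Qed.

Lemma eqv_sym x y : eqv x y -> eqv y x.
Proof. by move/leavitt_ideal_opp; rewrite opprB. Qed.

Lemma eqv_trans y x z : eqv x y -> eqv y z -> eqv x z.
Proof. by move=> H1 H2; have := lid_add H1 H2; rewrite addrA subrK. Qed.

Lemma eqv_add x y x' y' : eqv x x' -> eqv y y' -> eqv (x + y) (x' + y').
Proof.
move=> H1 H2; have := lid_add H1 H2.
by rewrite opprD addrACA.
Qed.

Lemma eqv_mul x y x' y' : eqv x x' -> eqv y y' -> eqv (x * y) (x' * y').
Proof.
move=> H1 H2; apply: (@eqv_trans (x' * y)).
  by rewrite -mulrBl; apply: LI_mulr.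
by rewrite -mulrBr; apply: LI_mull.
Qed.

Lemma eqv_scale (r : R) x x' : eqv x x' -> eqv (r *: x) (r *: x').
Proof. by move=> H; rewrite -scalerBr; apply: LI_scale. Qed.

Lemma eqv_rel x y : leavitt_rel src rng (x - y) -> eqv x y.
Proof. exact: LI_rel. Qed.

Lemma word_cat u v : word (u ++ v) = word u * word v.
Proof.
rewrite /Defs.word malgM_def fgmulUU mulr1; congr (<< _ >>).
by apply/eqP; rewrite fmP fmM.
Qed.

Lemma word_nil : word [::] = 1.
Proof.
rewrite /Defs.word; congr (<< _ >>); apply/eqP; by rewrite fmP fm1.
Qed.

Lemma word_cons l u : word (l :: u) = X l * word u.
Proof. by rewrite -word_cat. Qed.

Lemma LI_0 : LI 0. Proof. exact: lid0. Qed.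
Lemma LI_add x y : LI x -> LI y -> LI (x + y). Proof. exact: lid_add. Qed.
Lemma eqv_assoc x y z w : eqv ((x * y) * z) w -> eqv (x * (y * z)) w.
Proof. exact: g_assoc. Qed.
Lemma eqv_assocr x y z w : eqv (x * (y * z)) w -> eqv ((x * y) * z) w.
Proof. exact: g_assocr. Qed.
Lemma eqv_sub x y x' y' : eqv x x' -> eqv y y' -> eqv (x - y) (x' - y').
Proof. exact: (g_sub LI_add (@leavitt_ideal_opp V Ed src rng R)). Qed.
Lemma eqv_sum (I0t : Type) (r : seq I0t) (F G : I0t -> FA) :
  (forall i, eqv (F i) (G i)) -> eqv (\sum_(i <- r) F i) (\sum_(i <- r) G i).
Proof. exact: (g_sum LI_0 LI_add). Qed.
Lemma eqv_mid x a b y : eqv (a * b) 0 -> eqv (x * a * (b * y)) 0.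
Proof. exact: (g_mid LI_mull LI_mulr). Qed.
Lemma eqv_mid2 x a b c y : eqv (a * b) c -> eqv (x * a * (b * y)) (x * c * y).
Proof. exact: (g_mid2 LI_mull LI_mulr). Qed.
Lemma eqv_idem x u y : eqv (u * u) u -> eqv (x * u * y) ((x * u) * (u * y)).
Proof. exact: (g_idem (@leavitt_ideal_opp V Ed src rng R) LI_mull LI_mulr). Qed.
Lemma eqv_zero_mul x y : eqv x 0 -> eqv (x * y) 0.
Proof. exact: (g_zero_mul LI_mulr). Qed.
Lemma eqv_mul_zero x y : eqv y 0 -> eqv (x * y) 0.
Proof. exact: (g_mul_zero LI_mull). Qed.

End Alg.

Lemma iter_per (T : Type) (s : T -> T) g a b :
  iter a.+1 s g = g -> iter b.+1 s g = g -> iter a s g = iter b s g.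
Proof.
wlog le : a b / (a <= b)%N.
  move=> W Ha Hb; case: (leqP a b) => [le|/ltnW le]; first exact: W.
  by symmetry; apply: W.
move=> Ha; have [d ->] : exists d, b = (d + a)%N by exists (b - a)%N; rewrite subnK.
rewrite -addnS iterD Ha => Hd.
by rewrite addnC iterD Hd.
Qed.

Section Graph.
Variables (V Ed : finType) (src rng : Ed -> V).
Definition relc (e f : Ed) := rng e == src f.
Definition Uq (e : Ed) := forall f, src f = src e -> f = e.
Definition sgm (e : Ed) : Ed := odflt e [pick f | src f == rng e].
Definition Qe (e : Ed) :=
  [/\ (exists k, (0 < k)%N /\ iter k sgm e = e), forall i, Uq (iter i sgm e) &
      forall i, src (sgm (iter i sgm e)) = rng (iter i sgm e)].

Lemma sgm_src e f : src f = rng e -> src (sgm e) = rng e.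
Proof.
move=> H; rewrite /sgm; case: pickP => [g /eqP //|/(_ f)]; by rewrite H eqxx.
Qed.

Lemma sgm_U e f : src f = rng e -> Uq f -> sgm e = f.
Proof. by move=> H Uf; apply: Uf; rewrite H; exact: sgm_src H. Qed.

Lemma Q_step e f : Qe e -> src f = rng e -> f = sgm e /\ Qe (sgm e).
Proof.
move=> [[k [k0 Hk]] HU HS] Hf.
have Us : Uq (sgm e) := HU 1%N.
split; first by apply: Us; rewrite Hf (sgm_src Hf).
split; first by exists k; split=> //; rewrite -iterSr iterS Hk.
  by move=> i; rewrite -iterSr; apply: HU.
by move=> i; rewrite -iterSr; apply: HS.
Qed.

Lemma Q_path e es : path relc e es -> Qe e -> Qe (last e es).
Proof.
elim: es e => [|f es IH] e //= /andP [/eqP H Hp] Qee.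
have [Ef Qs] := Q_step Qee (esym H); subst f.
exact: IH.
Qed.

Lemma Q_inj e f : Qe e -> Qe f -> rng e = rng f -> e = f.
Proof.
move=> [[k [k0 Hk]] HUe HSe] [[l [l0 Hl]] _ HSf] H.
have Es : sgm e = sgm f.
  by symmetry; apply: (HUe 1%N); rewrite /= (HSf 0%N) (HSe 0%N) /= H.
have He : e = iter k.-1 sgm (sgm f) by rewrite -Es -iterSr prednK.
have Hf : f = iter l.-1 sgm (sgm f) by rewrite -iterSr prednK.
have Ge : iter k.-1.+1 sgm (sgm f) = sgm f by rewrite prednK // -Es -iterSr iterS Hk.
have Gf : iter l.-1.+1 sgm (sgm f) = sgm f by rewrite prednK // -iterSr iterS Hl.
by apply: (etrans He); apply: (etrans _ (esym Hf)); exact: iter_per Ge Gf.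
Qed.

Hypothesis NE : condition_NE src rng.

Lemma notuniq_Q es : sorted relc es -> ~~ uniq (map src es) ->
  exists2 e, e \in es & Qe e.
Proof.
elim: es => [|e es IH] //= Hs.
have Hs' : sorted relc es := path_sorted Hs.
case Hu: (uniq (map src es)); last first.
  by move=> _; have [f fin Qf] := IH Hs' (negbT Hu); exists f => //; rewrite inE fin orbT.
rewrite andbT negbK => Hin.
set a := (fun f => src f == src e).
have Ha : has a es by apply/hasP; case/mapP: Hin => e' e'in Ee'; exists e' => //; rewrite /a Ee'.
set i := find a es.
have ilt : (i < size es)%N by rewrite -has_find.
set p := take i es.
have szp : size p = i by rewrite size_take ilt.
have Hnp : forall f, f \in p -> src f != src e.
  move=> f /(nthP e) [j jlt <-].
  have jlt' : (j < i)%N by rewrite -szp.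
  rewrite /p nth_take //.
  by have := before_find e jlt'; rewrite /a => ->.
have Hnth : src (nth e es i) = src e by apply/eqP; exact: (nth_find e Ha).
move: (Hs); rewrite -(cat_take_drop i es) (drop_nth e ilt) cat_path -/p /= => /and3P [Hp Hl _].
set c := e :: p.
have Hcl : src e = rng (last e p) by move/eqP: Hl; rewrite Hnth.
have Hcyc : is_cycle src rng c.
  exists e, p; split=> //; split=> //; split=> //.
  by move=> g /Hnp /eqP.
have Uc : forall x, x \in c -> Uq x.
  move=> x xin f Hf; case: (f =P x) => // nfx; exfalso.
  apply: (NE Hcyc); exists (index x c), f; rewrite nth_index //; split => //.
  by rewrite index_mem.
have cyc : cycle relc c by rewrite /= rcons_path Hp /relc -Hcl eqxx.
have sgm_next : forall x, x \in c -> sgm x = next c x.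
  move=> x xin; apply: sgm_U; first by apply/esym/eqP; exact: next_cycle cyc xin.
  by apply: Uc; rewrite mem_next.
have inc : forall n, iter n sgm e \in c.
  elim=> [|n IHn]; first by rewrite /= inE eqxx.
  by rewrite iterS sgm_next // mem_next.
have Uniq : uniq c.
  apply: (@map_uniq _ _ src); rewrite /=; apply/andP; split.
    by apply/negP => /mapP [g gin Eg]; move: (Hnp g gin); rewrite Eg eqxx.
  by rewrite /p map_take; apply: take_uniq.
have injn : injective (next c) := can_inj (prev_next Uniq).
have itn : forall n, iter n sgm e = iter n (next c) e.
  elim=> [|n IHn] //; by rewrite iterS sgm_next ?inc // IHn.
exists e; first by rewrite inE eqxx.
split.
- exists (order (next c) e); split; first exact: order_gt0.
  by rewrite itn iter_order.
- by move=> n; apply: Uc; apply: inc.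
- move=> n; rewrite sgm_next ?inc //; apply/esym/eqP.
  exact: next_cycle cyc (inc n).
Qed.

Lemma last_Q s : sorted relc s -> (#|V| < size s)%N -> forall x, Qe (last x s).
Proof.
move=> Hs Hsz x.
have Hnu : ~~ uniq (map src s).
  apply/negP => /card_uniqP; rewrite size_map => Hc.
  by move: (max_card (mem (map src s))); rewrite Hc leqNgt Hsz.
have [e ein Qee] := notuniq_Q Hs Hnu.
case/splitPr: ein Hs => p1 q Hs.
have Hq : path relc e q.
  case: p1 Hs => [//|y p1] /=; rewrite cat_path => /andP [_] /=.
  by case/andP.
by rewrite last_cat /=; apply: Q_path.
Qed.

End Graph.

Lemma sorted_rconsK (T : eqType) (r : rel T) s x : sorted r (rcons s x) -> sorted r s.
Proof. by case: s => [|z s] //=; rewrite rcons_path => /andP[]. Qed.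

Lemma sorted_rcons2 (T : eqType) (r : rel T) s x y :
  sorted r (rcons (rcons s x) y) -> r x y.
Proof.
case: s => [|z s] /=; first by case/andP.
by rewrite rcons_path last_rcons => /andP[].
Qed.

Section Red.
Variables (V Ed : finType) (src rng : Ed -> V) (R : ringType).
Local Notation FA := (FA V Ed R).
Local Notation word := (@word V Ed R).
Local Notation X := (@X V Ed R).
Local Notation Lv := (@Lv V Ed).
Local Notation Le := (@Le V Ed).
Local Notation Lg := (@Lg V Ed).
Local Notation LI := (@leavitt_ideal V Ed src rng R).
Local Notation eqv x y := (LI (x - y)).
Local Notation pword := (@pword V Ed R).
Local Notation pword_star := (@pword_star V Ed R).
Local Notation is_path := (is_path src rng).

Definition PP (a b : V * seq Ed) : FA := pword a * pword_star b.

Lemma pword_rcons v s e : pword (v, rcons s e) = word (rcons (map Le s) (Le e)).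
Proof. rewrite /Defs.pword -map_rcons; case: s => [|x s] //=. Qed.

Lemma pword_star_rcons v s e :
  pword_star (v, rcons s e) = X (Lg e) * word (map Lg (rev s)).
Proof.
case: s => [|x s]; first by rewrite word_nil mulr1.
have -> : pword_star (v, rcons (x :: s) e) = word (map Lg (rev (rcons (x :: s) e))) by reflexivity.
rewrite rev_rcons.
change (word (Lg e :: map Lg (rev (x :: s))) = X (Lg e) * word (map Lg (rev (x :: s)))).
exact: word_cons.
Qed.

Lemma word_rcons u l : word (rcons u l) = word u * X l.
Proof. by rewrite -cats1 word_cat. Qed.

Lemma word_map_cons (f : Ed -> letter V Ed) a s :
  word (map f (a :: s)) = X (f a) * word (map f s).
Proof. change (word (f a :: map f s) = X (f a) * word (map f s)); exact: word_cons. Qed.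

Lemma is_path_rcons v s e : is_path (v, rcons s e) -> is_path (v, s).
Proof.
rewrite /Defs.is_path /= => /andP [H1 H2]; apply/andP; split; last exact: sorted_rconsK H2.
by case: s H1 {H2}.
Qed.

Lemma XvX u : eqv (X (Lv u) * X (Lv u)) (X (Lv u)).
Proof. by apply: LI_rel; have := rel_vv src rng R u u; rewrite eqxx. Qed.

Lemma L_left v s e : is_path (v, rcons s e) ->
  eqv (word (map Le s) * X (Lv (src e))) (pword (v, s)).
Proof.
case/lastP: s => [|s l].
  move=> /andP [/eqP H1 _]; have -> : src e = _ := H1.
  rewrite word_nil mul1r; exact: eqv_refl.
move=> /andP [_ H2].
have /eqP <- := sorted_rcons2 H2.
rewrite pword_rcons map_rcons word_rcons.
apply: eqv_assocr; apply: eqv_mul; first exact: eqv_refl.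
exact: LI_rel (rel_fr src rng R l).
Qed.

Lemma L_right w s e : is_path (w, rcons s e) ->
  eqv (X (Lv (src e)) * word (map Lg (rev s))) (pword_star (w, s)).
Proof.
case/lastP: s => [|s l].
  move=> /andP [/eqP H1 _]; have -> : src e = _ := H1.
  change (eqv (X (Lv w) * word [::]) (X (Lv w))).
  rewrite word_nil mulr1; exact: eqv_refl.
move=> /andP [_ H2].
have /eqP <- := sorted_rcons2 H2.
rewrite pword_star_rcons rev_rcons word_map_cons.
apply: eqv_assoc; apply: eqv_mul; last exact: eqv_refl.
exact: LI_rel (rel_rg src rng R l).
Qed.

Lemma U_CK e : Uq src e -> eqv (X (Le e) * X (Lg e)) (X (Lv (src e))).
Proof.
move=> Ue.
have H := @rel_CK2 V Ed src rng R (src e) (ex_intro (fun f => src f = src e) e erefl).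
have E : (\sum_(f : Ed | src f == src e) X (Le f) * X (Lg f)) = X (Le e) * X (Lg e).
  apply: big_pred1 => f /=; apply/eqP/eqP => [/Ue //|->] //.
rewrite E in H; exact: LI_rel H.
Qed.

Lemma vv_zero a b : a != b -> eqv (X (Lv a) * X (Lv b)) 0.
Proof.
move=> nab; have H := rel_vv src rng R a b.
rewrite (negbTE nab) in H; exact: LI_rel H.
Qed.

Lemma ef_zero e f : rng e != rng f -> eqv (X (Le e) * X (Lg f)) 0.
Proof.
move=> nef.
apply: (eqv_trans (y := (X (Le e) * X (Lv (rng e))) * (X (Lv (rng f)) * X (Lg f)))).
  apply: eqv_mul; apply: eqv_sym.
    exact: LI_rel (rel_fr src rng R e).
  exact: LI_rel (rel_rg src rng R f).
by apply: eqv_mid; apply: vv_zero.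
Qed.

Lemma PP_rcons v es0 e w fs0 f :
  PP (v, rcons es0 e) (w, rcons fs0 f) =
  word (map Le es0) * X (Le e) * (X (Lg f) * word (map Lg (rev fs0))).
Proof. by rewrite /PP pword_rcons pword_star_rcons word_rcons. Qed.

Hypothesis NE : condition_NE src rng.

Lemma reduce n : forall a b, is_path a -> is_path b -> plen a = n -> plen b = n ->
  eqv (PP a b) 0 \/ exists a' b',
    [/\ (plen a' <= #|V|)%N, (plen b' <= #|V|)%N & eqv (PP a b) (PP a' b')].
Proof.
elim: n => [|n IH] [v es] [w fs] Ha Hb Hla Hlb.
  by right; exists (v, es), (w, fs); rewrite Hla Hlb; split => //; apply: eqv_refl.
case: (leqP n.+1 #|V|) => Hn.
  by right; exists (v, es), (w, fs); rewrite Hla Hlb; split => //; apply: eqv_refl.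
move: Ha Hb Hla Hlb; case/lastP: es => [|es0 e] //; case/lastP: fs => [|fs0 f] //.
move=> Ha Hb; rewrite /plen /= !size_rcons => [[Hla] [Hlb]].
have Qee : Qe src rng e.
  case/andP: (Ha) => _ Hs.
  have := @last_Q V Ed src rng NE (rcons es0 e) Hs; rewrite size_rcons Hla => /(_ Hn e).
  by rewrite last_rcons.
have Qff : Qe src rng f.
  case/andP: (Hb) => _ Hs.
  have := @last_Q V Ed src rng NE (rcons fs0 f) Hs; rewrite size_rcons Hlb => /(_ Hn f).
  by rewrite last_rcons.
rewrite PP_rcons.
case: (eqVneq (rng e) (rng f)) => Er; last first.
  by left; apply: eqv_mid; apply: ef_zero.
have Ef := Q_inj Qee Qff Er; subst f.
have Ue : Uq src e by case: Qee => _ /(_ 0%N).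
have Hred : eqv (word (map Le es0) * X (Le e) * (X (Lg e) * word (map Lg (rev fs0))))
               (PP (v, es0) (w, fs0)).
  apply: (eqv_trans (y := word (map Le es0) * X (Lv (src e)) * word (map Lg (rev fs0)))).
    by apply: eqv_mid2; apply: U_CK.
  apply: (eqv_trans (y := (word (map Le es0) * X (Lv (src e))) * (X (Lv (src e)) * word (map Lg (rev fs0))))).
    by apply: eqv_idem; apply: XvX.
  apply: eqv_mul; [exact: L_left Ha | exact: L_right Hb].
have [H0|[a' [b' [H1 H2 H3]]]] := IH (v, es0) (w, fs0) (is_path_rcons Ha) (is_path_rcons Hb) Hla Hlb.
  by left; apply: eqv_trans Hred H0.
by right; exists a', b'; split; [exact: H1 | exact: H2 | exact: eqv_trans Hred H3].
Qed.

End Red.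

Section GenMod.
Variables (R : ringType) (M : lmodType R).
Implicit Types (G : nat -> M) (c d : nat -> R).

Lemma comb0 G N : \sum_(i < N) (fun _ : nat => 0 : R) i *: G i = 0.
Proof. by rewrite big1 // => i _; rewrite scale0r. Qed.

Lemma combB G N c d :
  \sum_(i < N) (fun i => c i - d i) i *: G i =
  \sum_(i < N) c i *: G i - \sum_(i < N) d i *: G i.
Proof. by rewrite -sumrB; apply: eq_bigr => i _; rewrite scalerBl. Qed.

Lemma combZ G N c a :
  \sum_(i < N) (fun i => a * c i) i *: G i = a *: \sum_(i < N) c i *: G i.
Proof. by rewrite scaler_sumr; apply: eq_bigr => i _; rewrite scalerA. Qed.

Lemma comb_delta G N c j r : (j < N)%N ->
  \sum_(i < N) (fun i => c i + (if i == j then r else 0)) i *: G i =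
  r *: G j + \sum_(i < N) c i *: G i.
Proof.
move=> jN; rewrite addrC.
have -> : \sum_(i < N) (c i + (if nat_of_ord i == j then r else 0)) *: G i =
  \sum_(i < N) c i *: G i + \sum_(i < N) (if nat_of_ord i == j then r else 0) *: G i.
  by rewrite -big_split; apply: eq_bigr => i _; rewrite scalerDl.
congr (_ + _).
rewrite (bigD1 (Ordinal jN)) //= eqxx big1 ?addr0 // => i /negbTE.
have -> : (i == Ordinal jN) = (nat_of_ord i == j) by [].
by move=> ->; rewrite scale0r.
Qed.

Lemma comb_trunc G N c :
  \sum_(i < N) (fun i => if (i < N)%N then c i else 0) i *: G i = \sum_(i < N) c i *: G i.
Proof. by apply: eq_bigr => i _; rewrite /= ltn_ord. Qed.

Lemma scale0_add r (y : M) : r *: (0 : M) + y = y.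
Proof. by rewrite scaler0 add0r. Qed.

Lemma combMr (A : lalgType R) (G : nat -> A) N c a (z : A)
  (HG : forall i, G i * z = a *: G i) :
  \sum_(i < N) (fun i => c i * a) i *: G i = (\sum_(i < N) c i *: G i) * z.
Proof.
rewrite mulr_suml; apply: eq_bigr => i _; by rewrite -scalerAl HG scalerA.
Qed.

End GenMod.

Section Final.
Variables (V Ed : finType) (src rng : Ed -> V) (R : ringType).
Local Notation FA := (FA V Ed R).
Local Notation word := (@word V Ed R).
Local Notation X := (@X V Ed R).
Local Notation Lv := (@Lv V Ed).
Local Notation LI := (@leavitt_ideal V Ed src rng R).
Local Notation eqv x y := (LI (x - y)).
Local Notation pword := (@pword V Ed R).
Local Notation pword_star := (@pword_star V Ed R).
Local Notation is_path := (is_path src rng).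
Local Notation LPA := (LPA src rng R).
Local Notation PP := (@PP V Ed R).

Definition all_seqs n : seq (seq Ed) := [seq tval t | t <- enum {: n.-tuple Ed}].
Lemma mem_all_seqs s : s \in all_seqs (size s).
Proof. by apply/mapP; exists (in_tuple s) => //; rewrite mem_enum. Qed.

Definition short_seqs := flatten [seq all_seqs n | n <- iota 0 #|V|.+1].
Lemma mem_short s : (size s <= #|V|)%N -> s \in short_seqs.
Proof.
move=> H; apply/flattenP; exists (all_seqs (size s)); last exact: mem_all_seqs.
by apply/mapP; exists (size s) => //; rewrite mem_iota add0n ltnS.
Qed.

Definition Ps := [seq (v, s) | v <- enum V, s <- short_seqs].
Lemma mem_Ps a : (plen a <= #|V|)%N -> a \in Ps.
Proof. by case: a => v s H; apply: allpairs_f; [rewrite mem_enum | exact: mem_short]. Qed.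

Definition pairs := [seq (a, b) | a <- Ps, b <- Ps].
Definition Nn := size pairs.
Definition G (i : nat) : FA :=
  if nth None (map Some pairs) i is Some ab then PP ab.1 ab.2 else 0.
Definition Comb (c : nat -> R) : FA := \sum_(i < Nn) c i *: G i.

Lemma G_pair a b : (plen a <= #|V|)%N -> (plen b <= #|V|)%N ->
  exists2 j, (j < Nn)%N & G j = PP a b.
Proof.
move=> Ha Hb; have abin : (a, b) \in pairs by apply: allpairs_f; apply: mem_Ps.
exists (index (a, b) pairs); first by rewrite index_mem.
rewrite /G. rewrite (nth_map (a, b)); last by rewrite index_mem. rewrite nth_index //.
Qed.


Lemma pi_eq x y : eqv x y -> \pi_LPA x = \pi_LPA y.
Proof. by move=> H; apply/eqquotP; apply/asboolP. Qed.

Lemma repr_eqv x : eqv (repr (\pi_LPA x)) x.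
Proof. by have /eqquotP /asboolP := reprK (\pi_LPA x). Qed.

Lemma pi_mul x y : lpa_mul (\pi_LPA x) (\pi_LPA y) = \pi_LPA (x * y).
Proof. by apply: pi_eq; apply: eqv_mul; apply: repr_eqv. Qed.

Lemma pi_sub x y : lpa_sub (\pi_LPA x) (\pi_LPA y) = \pi_LPA (x - y).
Proof. by apply: pi_eq; apply: eqv_sub; apply: repr_eqv. Qed.


Lemma eqv_eqr x y y' : y = y' -> eqv x y' -> eqv x y.
Proof. by move->. Qed.

Lemma eqv_eql x x' y : x = x' -> eqv x' y -> eqv x y.
Proof. by move->. Qed.

Definition Pt (t : R * (V * seq Ed) * (V * seq Ed)) :=
  [&& is_path t.1.2, is_path t.2 & plen t.1.2 == plen t.2].

Hypothesis NE : condition_NE src rng.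

Lemma rep (s : seq (R * (V * seq Ed) * (V * seq Ed))) : all Pt s ->
  exists c, eqv (\sum_(t <- s) t.1.1 *: (pword t.1.2 * pword_star t.2)) (Comb c).
Proof.
elim: s => [|t s IH] /=.
  move=> _; exists (fun _ => 0).
  apply: (eqv_eqr (comb0 G Nn)).
  rewrite big_nil; exact: eqv_refl.
move=> /andP [Ht Hs]; have [c Hc] := IH Hs.
case: t Ht => [[r a] b] /and3P [Ha Hb /eqP Hab].
rewrite big_cons.
have [H0|[a' [b' [H1 H2 H3]]]] := @reduce V Ed src rng R NE (plen a) a b Ha Hb erefl (esym Hab).
  exists c; apply: (eqv_trans (y := r *: 0 + Comb c)).
    by apply: eqv_add; [exact: eqv_scale H0 | exact: Hc].
  apply: (eqv_eql (scale0_add r (Comb c))); exact: eqv_refl.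
have [j jN Gj] := G_pair H1 H2.
exists (fun i => c i + (if i == j then r else 0)).
apply: (eqv_eqr (comb_delta G c r jN)).
rewrite Gj; apply: eqv_add; [exact: eqv_scale H3 | exact: Hc].
Qed.


Lemma LPA0_comb x : LPA0 x -> exists c, x = \pi_LPA (Comb c).
Proof.
case=> s [Hs ->]; have [c Hc] := rep Hs.
by exists c; apply: pi_eq.
Qed.

Lemma word_C u (a : R) : word u * a%:MP = a *: word u.
Proof.
rewrite /Defs.word malgM_def fgmulUU mulm1 mul1r.
apply/malgP => k; rewrite mcoeffZ !mcoeffU.
by case: (_ == k); rewrite ?mulr1n ?mulr0n ?mulr1 ?mulr0.
Qed.

Lemma pword_word a : exists u, pword a = word u.
Proof. by case: a => v [|e s]; [exists [:: Lv v] | exists (map (@Le V Ed) (e :: s))]. Qed.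

Lemma pword_star_word a : exists u, pword_star a = word u.
Proof. by case: a => v [|e s]; [exists [:: Lv v] | exists (map (@Lg V Ed) (rev (e :: s)))]. Qed.

Lemma G_C i (a : R) : G i * a%:MP = a *: G i.
Proof.
rewrite /G; case: (nth None _ i) => [[p q]|]; last by rewrite mul0r scaler0.
change (pword p * pword_star q * a%:MP = a *: (pword p * pword_star q)).
have [u ->] := pword_word p; have [w ->] := pword_star_word q.
by rewrite -word_cat word_C.
Qed.

Lemma Comb_l (a : R) c : a%:MP * Comb c = Comb (fun i => a * c i).
Proof. by rewrite mul_malgC /Comb combZ. Qed.

Lemma Comb_r (a : R) c : Comb c * a%:MP = Comb (fun i => c i * a).
Proof. by rewrite /Comb (combMr _ _ (fun i => G_C i a)). Qed.


Lemma LPA0_C (a : R) : LPA0 (\pi_LPA (a%:MP : FA)).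
Proof.
exists [seq (a, (v, [::]), (v, [::])) | v <- index_enum V]; split.
  by apply/allP => t /mapP [v _ ->].
apply: pi_eq; rewrite big_map.
apply: (eqv_eql (x' := a *: 1)); first by rewrite -mul_malgC mulr1.
apply: (eqv_trans (y := a *: \sum_(v : V) X (Lv v))).
  by apply: eqv_scale; apply: LI_rel; apply: rel_unit.
apply: (eqv_eql (scaler_sumr _ _ _ _)).
apply: eqv_sum => v; apply: eqv_scale; apply: eqv_sym; apply: XvX.
Qed.

End Final.

Section Main.
Variables (V Ed : finType) (src rng : Ed -> V) (R : ringType).
Hypothesis NE : condition_NE src rng.
Local Notation LPA := (LPA src rng R).
Local Notation N := (Nn V Ed).
Local Notation Comb := (@Comb V Ed R).

Lemma main_gen (isI : (LPA -> Prop) -> Prop) (sc : R -> R -> R)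
  (sc0 : forall a, sc a 0 = 0)
  (accR : forall Cr : nat -> R -> Prop, (forall n, isId sc (Cr n)) ->
     (forall n x, Cr n x -> Cr n.+1 x) ->
     exists M, forall n, (M <= n)%N -> forall x, Cr n x -> Cr M x)
  (HI : forall J, isI J -> [/\ forall x, J x -> LPA0 x, J (@lpa_zero V Ed src rng R),
                     forall x y, J x -> J y -> J (lpa_sub x y) &
                     forall a c, J (\pi_LPA (Comb c)) -> J (\pi_LPA (Comb (fun i => sc a (c i))))]) :
  ACC isI.
Proof.
move=> C HC Hm.
pose D n (c : nat -> R) := (forall i, (N <= i)%N -> c i = 0) /\ C n (\pi_LPA (Comb c)).
have HD : forall n, is_sub sc N (D n).
  move=> n; have [h0 hz hs hm] := HI _ (HC n); split.
  + by move=> c [].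
  + split => //; have -> : Comb (fun _ => 0) = 0 := comb0 _ _; exact: hz.
  + move=> x y [sx Cx] [sy Cy]; split; first by move=> i Hi; rewrite sx ?sy ?subr0.
    suff -> : \pi_LPA (Comb (fun i => x i - y i)) = lpa_sub (\pi_LPA (Comb x)) (\pi_LPA (Comb y)).
      exact: hs.
    by rewrite pi_sub; congr (\pi_LPA _); exact: combB.
  + move=> a x [sx Cx]; split; first by move=> i Hi; rewrite sx ?sc0.
    exact: hm.
have HDm : forall n c, D n c -> D n.+1 c.
  by move=> n c [sc' Cc]; split => //; apply: Hm.
have [M HM] := @vecACC R sc sc0 accR N D HD HDm.
exists M => n Hn x Cx.
have [h0 _ _ _] := HI _ (HC n).
have [c Ec] := LPA0_comb NE (h0 _ Cx).
pose c' := fun i => if (i < N)%N then c i else 0.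
have Ecc : Comb c' = Comb c := comb_trunc _ _ _.
have Dn : D n c'.
  split; first by move=> i Hi; rewrite /c' ltnNge Hi.
  by rewrite Ecc -Ec.
have [_ CM] := HM n Hn c' Dn.
by rewrite Ec -Ecc.
Qed.

End Main.

Theorem corollary4p6 (V Ed : finType) (src rng : Ed -> V) (R : ringType) :
  condition_NE src rng ->
  (left_noetherian R -> LPA0_left_noetherian src rng R) /\
  (right_noetherian R -> LPA0_right_noetherian src rng R).
Proof.
move=> NE; split => HR.
- apply: (@main_gen V Ed src rng R NE _ (fun a r => a * r)).
  + by move=> a; rewrite mulr0.
  + move=> Cr HCr; apply: HR => n; have [h0 hs hm] := HCr n; split => //.
    by move=> a x _; apply: hm.
  + move=> J [hS hz hs hm]; split => // a c Jc.
    rewrite -Comb_l -pi_mul; apply: hm => //; exact: LPA0_C.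
- apply: (@main_gen V Ed src rng R NE _ (fun a r => r * a)).
  + by move=> a; rewrite mul0r.
  + move=> Cr HCr; apply: HR => n; have [h0 hs hm] := HCr n; split => //.
    by move=> a x _; apply: hm.
  + move=> J [hS hz hs hm]; split => // a c Jc.
    rewrite -Comb_r -pi_mul; apply: hm => //; exact: LPA0_C.
Qed.
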